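(* Let $(X,\rho)$ be a metric space, $A\in CL(X)$ and $(A_k)\subset CL(X)$. If $f\colon[0,\infty)\to[0,\infty)$ is a modulus such that $\beta:=\lim_{t\to\infty}\frac{f(t)}{t}>0$ and $(A_k)$ is Wijsman strongly Cesàro summable to $A$ with respect to $f$, then $(A_k)$ is Wijsman strongly Cesàro summable to $A$.
   Context: A modulus is a function $f\colon[0,\infty)\to[0,\infty)$ such that $f(x)=0$ iff $x=0$, $f$ is subadditive, increasing and continuous (for such $f$ the limit $\lim_{t\to\infty}f(t)/t$ exists and is finite). $CL(X)$ denotes the set of all non-empty closed subsets of $(X,\rho)$, and $d(x,B)=\inf_{y\in B}\rho(x,y)$. $(A_k)$ is Wijsman strongly Cesàro summable to $A$ if $\lim_{n\to\infty}\frac1n\sum_{k=1}^n|d(x,A_k)-d(x,A)|=0$ for every $x\in X$; it is Wijsman strongly Cesàro summable to $A$ with respect to $f$ if $\lim_{n\to\infty}\frac1n\sum_{k=1}^n f(|d(x,A_k)-d(x,A)|)=0$ for every $x\in X$. *)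

(* Defs.v *)
From HB Require Import structures.
From mathcomp Require Import all_boot all_order all_algebra.
From mathcomp Require Import all_classical all_reals all_analysis.
Set Implicit Arguments. Unset Strict Implicit. Unset Printing Implicit Defensive.
Import Order.TTheory GRing.Theory Num.Theory.
Import numFieldNormedType.Exports.
Local Open Scope classical_set_scope.
Local Open Scope ring_scope.

Definition is_metric (R : realType) (X : Type) (rho : X -> X -> R) : Prop :=
  [/\ (forall x y, 0 <= rho x y),
      (forall x y, rho x y = 0 <-> x = y),
      (forall x y, rho x y = rho y x) &
      (forall x y z, rho x z <= rho x y + rho y z)].

Definition metric_closed (R : realType) (X : Type) (rho : X -> X -> R)
  (B : set X) : Prop :=
  forall x, (forall e : R, 0 < e -> exists2 y, B y & rho x y < e) -> B x.

Definition CL (R : realType) (X : Type) (rho : X -> X -> R) (B : set X) : Prop :=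
  B !=set0 /\ metric_closed rho B.

Definition dist_set (R : realType) (X : Type) (rho : X -> X -> R)
  (x : X) (B : set X) : R :=
  inf [set rho x y | y in B].

(* f : [0,oo) -> [0,oo) is a modulus (f given on R, only its values on [0,oo)
   matter). "Increasing" read as non-decreasing. *)
Definition modulus (R : realType) (f : R -> R) : Prop :=
  [/\ (forall x, 0 <= x -> 0 <= f x),
      (forall x, 0 <= x -> (f x = 0 <-> x = 0)),
      (forall x y, 0 <= x -> 0 <= y -> f (x + y) <= f x + f y),
      (forall x y, 0 <= x -> x <= y -> f x <= f y) &
      {within `[0, +oo[, continuous f}].

Definition wijsman_strong_cesaro_f (R : realType) (X : Type) (rho : X -> X -> R)
  (f : R -> R) (Ak : nat -> set X) (A : set X) : Prop :=
  forall x : X,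
    (fun n : nat => n%:R^-1 *
       \sum_(1 <= k < n.+1) f `|dist_set rho x (Ak k) - dist_set rho x A|)
      @ \oo --> (0 : R).

Definition wijsman_strong_cesaro (R : realType) (X : Type) (rho : X -> X -> R)
  (Ak : nat -> set X) (A : set X) : Prop :=
  forall x : X,
    (fun n : nat => n%:R^-1 *
       \sum_(1 <= k < n.+1) `|dist_set rho x (Ak k) - dist_set rho x A|)
      @ \oo --> (0 : R).

(* Main.v *)
Require Import Defs.
From HB Require Import structures.
From mathcomp Require Import all_boot all_order all_algebra.
From mathcomp Require Import all_classical all_reals all_analysis.
Import Order.TTheory GRing.Theory Num.Theory.
Import numFieldNormedType.Exports.
Local Open Scope classical_set_scope.
Local Open Scope ring_scope.
Lemma lim0_ncvg (R : realType) (F : set_system R) : ~ cvg F -> lim F = 0.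
Proof.
move=> nF. rewrite /lim /lim_in. case: xgetP => //. move=> x E Fx. exfalso; apply: nF. rewrite /lim /lim_in -E. exact: Fx.
Qed.

Lemma mod_mul (R : realType) (f : R -> R) : modulus f ->
  forall t, 0 <= t -> forall n : nat, f (n%:R * t) <= n%:R * f t.
Proof.
case=> f0 fz fsub fmon fc t t0; elim=> [|n IH].
  by rewrite !mul0r; have /fz[_ ->] : (0:R) <= 0 by [].
rewrite -addn1 !natrD !mulrDl !mul1r.
apply: (le_trans (fsub _ _ _ t0)); first by rewrite mulr_ge0.
by rewrite lerD2r.
Qed.

Lemma mod_lin (R : realType) (f : R -> R) : modulus f ->
  0 < lim ((fun t => f t / t) @ +oo) ->
  forall s, 0 <= s -> lim ((fun t => f t / t) @ +oo) * s <= f s.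
Proof.
move=> fm bpos.
set b := lim _ in bpos *.
have cv : cvg ((fun t => f t / t) @ +oo).
  by apply: contrapT => /lim0_ncvg; rewrite -/b => b0; rewrite b0 ltxx in bpos.
move=> s; rewrite le0r => /orP[/eqP->|s0].
  by case: fm => f0 fz _ _ _; rewrite mulr0 (proj2 (fz 0 (lexx 0)) erefl).
rewrite -(ler_pdivlMr _ _ s0).
rewrite leNgt; apply/negP => H.
have := cvgr_gt _ cv _ H.
case=> M [Mr HM].
set n := (Num.bound (`|M| / s)).+1.
have n0 : (0:R) < n%:R by rewrite ltr0n.
have Mn : M < n%:R * s.
  rewrite (le_lt_trans (ler_norm M)) // -ltr_pdivrMr // /n.
  apply: (lt_le_trans (archi_boundP _)); first by rewrite divr_ge0 // ltW.
  by rewrite ler_nat.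
have := HM _ Mn => /=.
apply/negP; rewrite -leNgt.
rewrite ler_pdivrMr ?mulr_gt0 // mulrCA divfK ?gt_eqF //.
exact: (@mod_mul R f fm _ (ltW s0) n).
Qed.

Theorem theorem4p6 (R : realType) (X : Type) (rho : X -> X -> R)
  (A : set X) (Ak : nat -> set X) (f : R -> R) :
  is_metric rho ->
  CL rho A ->
  (forall k, CL rho (Ak k)) ->
  modulus f ->
  0 < lim ((fun t => f t / t) @ +oo) ->
  wijsman_strong_cesaro_f rho f Ak A ->
  wijsman_strong_cesaro rho Ak A.
Proof.
move=> _ _ _ fm bpos Hf x.
have lin := @mod_lin R f fm bpos.
set b := lim _ in bpos lin.
have Hx := Hf x.
apply: (@squeeze_cvgr _ _ _ _ (fun _ => 0)
  (fun n : nat => b^-1 * (n%:R^-1 *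
       \sum_(1 <= k < n.+1) f `|dist_set rho x (Ak k) - dist_set rho x A|)) _).
- near=> n; apply/andP; split.
    by rewrite mulr_ge0 ?invr_ge0 ?ler0n // sumr_ge0.
  rewrite mulrCA ler_wpM2l ?invr_ge0 ?ler0n // mulr_sumr ler_sum // => k _.
  by rewrite ler_pdivlMl ?invr_gt0 // lin.
- exact: cvg_cst.
- rewrite -[X in _ --> X](mulr0 b^-1).
  by apply: cvgM; [exact: cvg_cst | exact: Hx].
Unshelve. all: by end_near.
Qed.
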